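(* Let $m\ge3$ be an integer, $\beta=\frac{m+\sqrt{m^2-4}}{2}$, $\alpha=1/\beta$, and let $\mathbf U=(U_k)$ be given by $U_{-1}=0$, $U_0=1$, $U_{k+1}=mU_k-U_{k-1}$. Let $n\ge1$ with $(n)_{\mathbf U}=a_Na_{N-1}\cdots a_1a_0$, let $b_0$ be the last digit of $(n+1)_{\mathbf U}$, and let $\Delta P_\alpha(n)=P_\alpha(n+1)-P_\alpha(n)$. Then: (i) if $b_0=0$, the string $a_Na_{N-1}\cdots a_1$ is the $\mathbf U$-expansion of $n+\Delta P_\alpha(n)-1$; (ii) if $b_0\ne0$, the string $a_Na_{N-1}\cdots a_1$ is the $\mathbf U$-expansion of $\Delta P_\alpha(n)-1$. (Here the empty string is the $\mathbf U$-expansion of $0$.)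
   Context: $\mathbf U$-expansion: for $n\ge1$, $(n)_{\mathbf U}=a_N\cdots a_0$ is the unique string of non-negative integers with $a_N\ne0$, $n=\sum_{k=0}^N a_kU_k$ and $\sum_{k=0}^i a_kU_k<U_{i+1}$ for all $i\le N$ (the greedy representation); the expansion of $0$ is the empty word. For irrational $\alpha\in(0,1)$, $P_\alpha(n)$ denotes the number of factors $u$ of length $n$ of a Sturmian sequence (aperiodic binary sequence in which any two factors of equal length differ by at most $1$ in the number of occurrences of each letter) over $\{a,b\}$ with frequency of $b$ equal to $\alpha$ such that $(|u|_a,|u|_b)=(\lfloor(1-\alpha)n\rfloor,\lceil n\alpha\rceil)$; equivalently $P_\alpha(n)=\#\{k\in\{1,\dots,n\}:\{k\alpha\}\le\{n\alpha\}\}$. *)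

(* Defs.v *)
From HB Require Import structures.
From mathcomp Require Import all_boot all_order all_algebra.
From mathcomp Require Import reals.
Set Implicit Arguments. Unset Strict Implicit. Unset Printing Implicit Defensive.
Import Order.TTheory GRing.Theory Num.Theory.

(* U_0 = 1, U_1 = m (= m*U_0 - U_{-1} with U_{-1} = 0), U_{k+2} = m U_{k+1} - U_k.
   For m >= 3 the sequence is increasing, so truncated subtraction is exact. *)
Fixpoint Useq (m k : nat) : nat :=
  match k with
  | 0 => 1
  | 1 => m
  | (k'.+1 as k1).+1 => m * Useq m k1 - Useq m k'
  end.

(* A digit string is stored little-endian: s`_k = a_k, so s = [:: a_0; ...; a_N]. *)
Definition Uval (m : nat) (s : seq nat) : nat :=
  \sum_(i < size s) nth 0 s i * Useq m i.

Definition is_Uexp (m : nat) (s : seq nat) (z : int) : Prop :=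
  [/\ (size s == 0) || (last 0 s != 0),
      z = ((Uval m s)%:Z)%R
    & forall i : nat, i < size s ->
        \sum_(k < i.+1) nth 0 s k * Useq m k < Useq m i.+1].

Local Open Scope ring_scope.

Definition fracpart (R : realType) (x : R) : R := x - (Num.floor x)%:~R.

Definition Palpha (R : realType) (alpha : R) (n : nat) : nat :=
  count (fun k : nat => fracpart (k%:R * alpha) <= fracpart (n%:R * alpha))
        (iota 1 n).

(* Main.v *)
Require Import Defs.
From HB Require Import structures.
From mathcomp Require Import all_boot all_order all_algebra.
From mathcomp Require Import reals.
From mathcomp Require Import zify ring lra.
Import Order.TTheory GRing.Theory Num.Theory.

Section U.
Variable m : nat.
Hypothesis m3 : (3 <= m)%N.
Local Notation U := (Useq m).

Lemma Ujoint k : U k < U k.+1 /\ U k.+2 + U k = m * U k.+1.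
Proof.
elim: k => [|k [IH1 IH2]].
  rewrite /=; nia.
have e : U k.+3 = m * U k.+2 - U k.+1 by [].
have h : U k.+1 < U k.+2 by nia.
split=> //. rewrite e. nia.
Qed.
Lemma Ult k : U k < U k.+1. Proof. by case: (Ujoint k). Qed.
Lemma Urec k : U k.+2 + U k = m * U k.+1. Proof. by case: (Ujoint k). Qed.
Lemma Ugt0 k : 0 < U k. Proof. by elim: k => [//|k IH]; have := Ult k; lia. Qed.
Lemma Umono i j : i <= j -> U i <= U j.
Proof. move=> /subnK <-; elim: (j - i) => [//|d IH]; rewrite addSn; apply: (leq_trans IH); exact: ltnW (Ult _). Qed.
End U.

Section S.
Variable m : nat.
Hypothesis m3 : (3 <= m)%N.
Local Notation U := (Useq m).
Variable d : nat -> nat.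
Definition ns i := \sum_(k < i.+1) d k * U k.
Definition ys i := \sum_(k < i.+1) d k.+1 * U k.
Hypothesis Hall : forall j, ns j < U j.+1.

Lemma nsS i : ns i.+1 = ns i + d i.+1 * U i.+1.
Proof. by rewrite /ns big_ord_recr. Qed.
Lemma ysS i : ys i.+1 = ys i + d i.+2 * U i.+1.
Proof. by rewrite /ys big_ord_recr. Qed.

Lemma shiftP i : ys i < U i.+1 /\ (ns i.+1 + U i.+1 < U i.+2 -> ys i + U i < U i.+1).
Proof.
elim: i => [|i [IH1 IH2]].
  have H1 := Hall 1. move: H1.
  rewrite /ys /ns !big_ord_recr !big_ord0 /=. nia.
have H := Hall i.+2. rewrite nsS in H.
have r1 := @Urec m m3 i. have r2 := @Urec m m3 i.+1.
have l0 := @Ult m m3 i. have l1 := @Ult m m3 i.+1.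
rewrite ysS nsS.
move: H IH1 IH2 r1 r2 l0 l1.
set c := d i.+2; set u0 := U i; set u1 := U i.+1; set u2 := U i.+2; set u3 := U i.+3.
set n1 := ns i.+1; set y := ys i.
move=> H IH1 IH2 r1 r2 l0 l1.
have cm : c < m by nia.
split.
- case: (ltngtP c m.-1) => [lt|gt|eq]; last first.
  + rewrite eq. have : n1 + u1 < u2 by nia. move/IH2 => h. nia.
  + lia.
  + nia.
- move=> H2. have cm2 : c <= m - 2 by nia.
  case: (ltngtP c (m-2)) => [lt|gt|eq]; last first.
  + rewrite eq. have : n1 + u1 < u2 by nia. move/IH2 => h. nia.
  + lia.
  + nia.
Qed.
End S.
Local Open Scope ring_scope.

Section R.
Variable R : realType.
Variable m : nat.
Hypothesis m3 : (3 <= m)%N.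
Local Notation U := (Useq m).
Variable a : R.
Hypothesis a0 : 0 < a.
Hypothesis a1 : a < 1.
Hypothesis a2 : a * a = m%:R * a - 1.
Variable d : nat -> nat.
Hypothesis Hall : forall j, (ns m d j < U j.+1)%N.
Definition Sr i := \sum_(k < i.+1) (d k)%:R * a ^+ k.+1.

Lemma SrS i : Sr i.+1 = Sr i + (d i.+1)%:R * a ^+ i.+2.
Proof. by rewrite /Sr big_ord_recr. Qed.

Lemma Sbound i : Sr i <= 1 - (1 - a) * a ^+ i.+1 /\
   ((ns m d i + U i < U i.+1)%N -> Sr i <= 1 - a ^+ i.+1).
Proof.
have a0' := a0; have a1' := a1; have a2' := a2.
elim: i => [|i [IH1 IH2]].
  have H := Hall 0. move: H. rewrite /Sr /ns !big_ord_recr !big_ord0 /= ?add0n ?add0r ?mul1n ?muln1 expr1.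
  move=> H. split.
  + have : (d 0 + 1 <= m)%N by lia. rewrite -(ler_nat R) natrD ?mulr1n => h.
    have : (d 0)%:R * a <= (m%:R - 1) * a by apply: ler_wpM2r; [lra|lra].
    nra.
  + move=> H2. have : (d 0 + 2 <= m)%N by lia. rewrite -(ler_nat R) natrD ?mulr1n => h.
    have : (d 0)%:R * a <= (m%:R - 2) * a by apply: ler_wpM2r; [lra|lra].
    nra.
have H := Hall i.+1. rewrite nsS in H.
have r1 := @Urec m m3 i. have l0 := @Ult m m3 i. have l1 := @Ult m m3 i.+1.
rewrite SrS nsS (exprSr a i.+1).
have p0 : 0 < a ^+ i.+1 by apply: exprn_gt0.
have am : (m%:R - 1) * a <= 1.
  have : 0 <= a * (1 - a) by apply: mulr_ge0; lra.
  nra.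
move: H IH1 IH2 r1 l0 l1 p0.
set c := d i.+1; set u0 := U i; set u1 := U i.+1; set u2 := U i.+2.
set n1 := ns m d i; set S := Sr i; set P := a ^+ i.+1.
move=> H IH1 IH2 r1 l0 l1 p0.
have e : P * a * a = m%:R * (P * a) - P.
  by rewrite -mulrA a2; ring.
have Pa0 : 0 < P * a by apply: mulr_gt0.
have cm : (c < m)%N by nia.
split.
- case: (ltngtP c m.-1) => [lt|gt|eq]; last first.
  + have : (n1 + u0 < u1)%N by rewrite eq in H; nia. move/IH2 => h.
    have cR : c%:R + 1 = m%:R :> R by rewrite natr1; congr (_%:R); lia.
    have : c%:R * (P * a) + (P * a) = m%:R * (P * a) by rewrite -cR; ring.
    lra.
  + lia.
  + have : (c + 2 <= m)%N by lia. rewrite -(ler_nat R) natrD ?mulr1n => h.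
    have : c%:R * (P * a) <= (m%:R - 2) * (P * a) by apply: ler_wpM2r; [lra|lra].
    lra.
- move=> H2. have cm2 : (c + 2 <= m)%N by nia.
  have am' : (m%:R - 1) * (P * a) <= P.
    have : (m%:R - 1) * a * P <= 1 * P by apply: ler_wpM2r; [lra|lra].
    move=> h; rewrite mulrA; lra.
  case: (ltngtP c (m-2)) => [lt|gt|eq]; last first.
  + have : (n1 + u0 < u1)%N by rewrite eq in H2; nia. move/IH2 => h.
    have cR : c%:R + 2 = m%:R :> R by rewrite -natrD; congr (_%:R); lia.
    have : c%:R * (P * a) + 2 * (P * a) = m%:R * (P * a) by rewrite -cR; ring.
    lra.
  + lia.
  + have : (c + 3 <= m)%N by lia. rewrite -(ler_nat R) natrD ?mulr1n => h.
    have : c%:R * (P * a) <= (m%:R - 3) * (P * a) by apply: ler_wpM2r; [lra|lra].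
    lra.
Qed.
End R.
Local Open Scope ring_scope.

Section P.
Variable R : realType.
Variable a : R.
Hypothesis a0 : 0 < a.
Hypothesis a1 : a < 1.

Lemma frac_itv (x : R) : 0 <= fracpart x < 1.
Proof.
rewrite /fracpart; have /andP[h1 h2] := floor_itv x.
rewrite intrD in h2. apply/andP; split; lra.
Qed.

Lemma frac_step (x : R) :
  Num.floor (x + a) = Num.floor x + (1 - a <= fracpart x)%R :> int /\
  fracpart (x + a) = fracpart x + a - ((1 - a <= fracpart x)%R)%:R.
Proof.
have a0' := a0; have a1' := a1.
have /andP[h1 h2] := floor_itv x. rewrite intrD in h2.
move: h1 h2; rewrite /fracpart; set z := Num.floor x => h1 h2.
case hb : (1 - a <= x - z%:~R).
- have e : Num.floor (x + a) = z + 1.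
    apply: floor_def; rewrite !intrD; apply/andP; split; lra.
  split; first by rewrite e.
  rewrite e intrD /=; lra.
- have e : Num.floor (x + a) = z.
    apply: floor_def; rewrite !intrD; apply/andP; split.
    + lra.
    + move/negbT: hb; rewrite -ltNge => hb; lra.
  split; first by rewrite e addr0.
  rewrite e /=; lra.
Qed.

Local Notation f k := (fracpart ((k%:R : R) * a)).

Lemma fS (k : nat) : (k.+1%:R : R) * a = k%:R * a + a.
Proof. by rewrite -natr1 mulrDl mul1r. Qed.

Lemma count_tele n :
  (count (fun k : nat => 1 - a <= f k) (iota 1 n))%:Z = Num.floor ((n.+1)%:R * a).
Proof.
have a0' := a0; have a1' := a1.
elim: n => [|n IH].
  rewrite /= mul1r; symmetry; apply: floor_def; rewrite add0r /=; apply/andP; split; lra.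
have -> : iota 1 n.+1 = iota 1 n ++ [:: n.+1] by rewrite -(addn1 n) iotaD addnC.
rewrite count_cat /= addn0 PoszD IH.
rewrite (fS n.+1); case: (frac_step ((n.+1)%:R * a)) => -> _.
done.
Qed.

Lemma count_lin (p q r s : pred nat) l :
  (forall x, (p x : nat) + q x = r x + s x)%N ->
  (count p l + count q l = count r l + count s l)%N.
Proof. move=> H; elim: l => //= x l IH; have := H x; lia. Qed.

Lemma f1 : f 1 = a.
Proof.
have a0' := a0; have a1' := a1.
rewrite /fracpart mul1r (_ : Num.floor a = 0) ?subr0 //.
apply: floor_def; rewrite add0r /=; apply/andP; split; lra.
Qed.

Lemma pw_wrap (fx y : R) : 0 <= fx < 1 -> 1 - a <= y < 1 ->
  ((fx + a - ((1 - a <= fx)%R)%:R <= y + a - 1)%R : nat) + (~~ (1 - a <= fx))%R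
   = (fx <= y)%R :> nat.
Proof.
have a0' := a0; have a1' := a1.
move=> /andP[h1 h2] /andP[h3 h4].
case hb : (1 - a <= fx) => /=.
- by rewrite ?mulr1n !lerD2r; case: (fx <= y).
- rewrite ?mulr0n ?subr0.
  have -> : (fx + a <= y + a - 1) = false.
    by apply/negbTE; rewrite -ltNge; lra.
  have -> : fx <= y by move/negbT: hb; rewrite -ltNge => hb; lra.
  done.
Qed.

Lemma pw_nowrap (fx y : R) : 0 <= fx < 1 -> 0 <= y -> y < 1 - a ->
  ((fx + a - ((1 - a <= fx)%R)%:R <= y + a)%R : nat)
   = ((fx <= y)%R : nat) + (1 - a <= fx)%R.
Proof.
have a0' := a0; have a1' := a1.
move=> /andP[h1 h2] h3 h4.
case hb : (1 - a <= fx) => /=.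
- rewrite mulr1n.
  have -> : (fx + a - 1 <= y + a) by lra.
  have -> : (fx <= y) = false by apply/negbTE; rewrite -ltNge; lra.
  done.
- by rewrite ?mulr0n ?subr0 lerD2r; case: (fx <= y).
Qed.

Lemma Pstep n :
  let w := (1 - a <= f n) in
  ((Palpha a n.+1)%:Z = (Palpha a n)%:Z + Num.floor (n%:R * a) + 1 - (w : nat)%:Z * n%:Z)%R.
Proof.
have a0' := a0; have a1' := a1.
move=> w.
have [fl fr] := frac_step (n%:R * a).
have ct := count_tele n. rewrite (fS n) fl -/w in ct.
have stepk : forall k : nat, f (1 + k)%N = f k + a - ((1 - a <= f k)%R)%:R.
  by move=> k; rewrite add1n fS; case: (frac_step (k%:R * a)).
have hC := count_predC (fun k : nat => 1 - a <= f k) (iota 1 n).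
rewrite size_iota in hC.
rewrite /Palpha.
rewrite (iotaD 1 1 n) count_cat (iotaDl 1 1 n) count_map.
rewrite (fS n) fr -/w /= ?addn0 f1.
have /andP[y0 y1] := frac_itv (n%:R * a).
have hwy : w = (1 - a <= fracpart (n%:R * a)) by [].
move: y0 y1 hwy ct; set y := fracpart (n%:R * a) => y0 y1 hwy ct.
case: w hwy ct => hy ct.
- have L := @count_lin (preim (addn 1) (fun k : nat => (f k <= y + a - true%:R)%R))
     (predC (fun k : nat => (1 - a <= f k)%R)) (fun k : nat => (f k <= y)%R) pred0 (iota 1 n).
  have L' : (count (preim (addn 1) (fun k : nat => (f k <= y + a - true%:R)%R)) (iota 1 n) +
     count (predC (fun k : nat => (1 - a <= f k)%R)) (iota 1 n) =
     count (fun k : nat => (f k <= y)%R) (iota 1 n))%N.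
    rewrite L ?count_pred0 ?addn0 // => x /=.
    rewrite stepk /= ?mulr1n addn0.
    apply: pw_wrap; first exact: frac_itv.
    by rewrite -hy y1.
  have nwy : (a <= y + a - true%:R) = false.
    by apply/negbTE; rewrite -ltNge /= mulr1n; lra.
  rewrite nwy.
  move: L' ct hC => /=. lia.
- have L := @count_lin (preim (addn 1) (fun k : nat => (f k <= y + a - false%:R)%R))
     pred0 (fun k : nat => (f k <= y)%R) (fun k : nat => (1 - a <= f k)%R) (iota 1 n).
  have L' : (count (preim (addn 1) (fun k : nat => (f k <= y + a - false%:R)%R)) (iota 1 n)
     = count (fun k : nat => (f k <= y)%R) (iota 1 n) +
       count (fun k : nat => (1 - a <= f k)%R) (iota 1 n))%N.
    rewrite -L ?count_pred0 ?addn0 // => x /=.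
    rewrite stepk /= ?mulr0n ?subr0 addn0.
    apply: pw_nowrap; first exact: frac_itv.
    + done.
    + by rewrite ltNge -hy.
  have nwy : (a <= y + a - false%:R) = true.
    by rewrite /= mulr0n subr0; lra.
  rewrite nwy.
  move: L' ct hC => /=. lia.
Qed.
End P.
Local Open Scope ring_scope.

Lemma Ua (R : realType) (m : nat) (a : R) : (3 <= m)%N -> a * a = m%:R * a - 1 ->
  forall k, (Useq m k.+1)%:R * a = (Useq m k)%:R + a ^+ k.+2.
Proof.
move=> m3 a2.
suff H : forall k, (Useq m k.+1)%:R * a = (Useq m k)%:R + a ^+ k.+2 /\
                   (Useq m k.+2)%:R * a = (Useq m k.+1)%:R + a ^+ k.+3.
  by move=> k; case: (H k).
have q0 : (Useq m 1)%:R * a = (Useq m 0)%:R + a ^+ 2.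
  by rewrite /= expr2 a2; ring.
have step : forall k, (Useq m k.+1)%:R * a = (Useq m k)%:R + a ^+ k.+2 ->
   (Useq m k.+2)%:R * a = (Useq m k.+1)%:R + a ^+ k.+3 ->
   (Useq m k.+3)%:R * a = (Useq m k.+2)%:R + a ^+ k.+4.
  move=> k h1 h2.
  have r : (Useq m k.+3)%:R = m%:R * (Useq m k.+2)%:R - (Useq m k.+1)%:R :> R.
    by rewrite -natrM -(@Urec m m3 k.+1) natrD; ring.
  have r' : (Useq m k.+2)%:R = m%:R * (Useq m k.+1)%:R - (Useq m k)%:R :> R.
    by rewrite -natrM -(@Urec m m3 k) natrD; ring.
  have e3 : a ^+ k.+3 = a ^+ k.+2 * a by rewrite exprSr.
  have e4 : a ^+ k.+4 = a ^+ k.+2 * (a * a) by rewrite exprSr exprSr mulrA.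
  rewrite r mulrBl -mulrA h2 h1 e4 e3 a2 r'; ring.
have q1 : (Useq m 2)%:R * a = (Useq m 1)%:R + a ^+ 3.
  have r : (Useq m 2)%:R = m%:R * (Useq m 1)%:R - (Useq m 0)%:R :> R.
    by rewrite -natrM -(@Urec m m3 0) natrD; ring.
  have e3 : a ^+ 3 = a * (a * a) by rewrite !exprS expr0 mulr1.
  rewrite r mulrBl -mulrA q0 e3 expr2.
  rewrite (_ : Useq m 0 = 1%N) // (_ : Useq m 1 = m) //.
  have h1 : a * (a * a) = a * (m%:R * a - 1) by rewrite a2.
  have h2 : m%:R * (a * a) = m%:R * (m%:R * a - 1) by rewrite a2.
  nra.
elim=> [|k [IH1 IH2]]; first by split.
split=> //; exact: step.
Qed.

Lemma nalpha (R : realType) (m : nat) (a : R) (d : nat -> nat) : (3 <= m)%N ->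
  a * a = m%:R * a - 1 ->
  forall i, (ns m d i.+1)%:R * a = (ys m d i)%:R + Sr R a d i.+1.
Proof.
move=> m3 a2.
have U1 := @Ua R m a m3 a2.

elim=> [|i IH].
  rewrite nsS SrS /ns /ys /Sr !big_ord_recr !big_ord0 /= !add0n !add0r.
  rewrite !muln1 natrD !natrM expr1 expr2.
  have h : (d 1%N)%:R * (a * a) = (d 1%N)%:R * (m%:R * a - 1) :> R by rewrite a2.
  lra.
rewrite nsS ysS (SrS R a d i.+1) natrD mulrDl IH natrM -mulrA U1 natrD natrM; ring.
Qed.

Lemma Uval_ns m s j : (size s <= j.+1)%N -> ns m (nth 0%N s) j = Uval m s.
Proof.
move=> H; rewrite /Uval /ns (big_ord_widen j.+1 (fun i => (nth 0%N s i * Useq m i)%N) H).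
rewrite [RHS]big_mkcond /=; apply: eq_bigr => i _; case: ifP => // /negbT.
by rewrite -leqNgt => h; rewrite nth_default.
Qed.

Lemma Hall_of m s z : (3 <= m)%N -> is_Uexp m s z ->
  forall j, (ns m (nth 0%N s) j < Useq m j.+1)%N.
Proof.
move=> m3 [_ _ H] j.
case: (ltnP j (size s)) => hj; first exact: H.
rewrite Uval_ns; last by lia.
case: s H hj => [|x s] H hj.
  by rewrite /Uval big_ord0; exact: Ugt0.
have := H (size s) (ltnSn _). rewrite -/(ns m (nth 0%N (x :: s)) (size s)) Uval_ns //.
move=> h; apply: (leq_trans h); apply: Umono; [done | simpl in hj; lia].
Qed.

Lemma Sr_ge0 (R : realType) (a : R) d i : 0 <= a -> 0 <= Sr R a d i.
Proof.
move=> a0; apply: sumr_ge0 => k _; apply: mulr_ge0; first exact: ler0n.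
exact: exprn_ge0.
Qed.

Lemma Sr_shift (R : realType) (a : R) d i :
  Sr R a d i.+1 = (d 0%N)%:R * a + a * Sr R a (fun k => d k.+1) i.
Proof.
rewrite /Sr big_ord_recl /= expr1 mulr_sumr; congr (_ + _); apply: eq_bigr => k _.
rewrite /bump /= add1n exprS; ring.
Qed.

Lemma Sr_lt1 (R : realType) (m : nat) (a : R) d i : (3 <= m)%N -> 0 < a -> a < 1 ->
  a * a = m%:R * a - 1 -> (forall j, (ns m d j < Useq m j.+1)%N) -> Sr R a d i < 1.
Proof.
move=> m3 a0 a1 a2 H.
have [h _] := @Sbound R m m3 a a0 a1 a2 d H i.
have : 0 < (1 - a) * a ^+ i.+1 by apply: mulr_gt0; [lra | exact: exprn_gt0].
lra.
Qed.

Lemma alpha_props (R : realType) (m : nat) : (3 <= m)%N ->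
  let beta : R := (m%:R + Num.sqrt (m%:R ^+ 2 - 4)) / 2 in
  let alpha : R := 1 / beta in
  0 < alpha /\ alpha < 1 /\ alpha * alpha = m%:R * alpha - 1.
Proof.
move=> m3; cbv zeta.
set r := Num.sqrt (m%:R ^+ 2 - 4 : R).
set beta := (m%:R + r) / 2.
set alpha := 1 / beta.
have m3R : (3%:R : R) <= m%:R by rewrite ler_nat.
have hs : 0 <= m%:R ^+ 2 - 4 :> R by rewrite expr2; nra.
have r0 : 0 <= r by exact: sqrtr_ge0.
have r2 : r * r = m%:R * m%:R - 4 by rewrite -expr2 sqr_sqrtr // expr2.
have b1 : 1 < beta by rewrite /beta; lra.
have hb : beta * beta = m%:R * beta - 1 by rewrite /beta; lra.
have ab : alpha * beta = 1 by rewrite /alpha mul1r mulVf //; lra.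
have a0 : 0 < alpha by rewrite /alpha; apply: divr_gt0; lra.
split=> //; split; first nra.
have : alpha * alpha * (beta * beta) = alpha * alpha * (m%:R * beta - 1) by rewrite hb.
nra.
Qed.
Local Open Scope ring_scope.

Lemma ys_behead m s j : ys m (nth 0%N s) j = ns m (nth 0%N (behead s)) j.
Proof. by rewrite /ys /ns; apply: eq_bigr => k _; rewrite nth_behead. Qed.

Lemma isB m s z : (3 <= m)%N -> is_Uexp m s z -> is_Uexp m (behead s) (Uval m (behead s))%:Z.
Proof.
move=> m3 Hs.
have HA := @Hall_of m s z m3 Hs.
split=> //.
- case: Hs => + _ _; case: s {HA} => [|x [|y l]] //=.
- move=> i _. have [h _] := @shiftP m m3 _ HA i.
  by rewrite -/(ns m (nth 0%N (behead s)) i) -ys_behead.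
Qed.

Lemma floor_expand (R : realType) m (a : R) s z : (3 <= m)%N -> 0 < a -> a < 1 ->
  a * a = m%:R * a - 1 -> is_Uexp m s z ->
  (Uval m s)%:R * a = (Uval m (behead s))%:R + Sr R a (nth 0%N s) (size s).+1 /\
  0 <= Sr R a (nth 0%N s) (size s).+1 < 1.
Proof.
move=> m3 a0 a1 a2 Hs.
have HA := @Hall_of m s z m3 Hs.
rewrite -(@Uval_ns m s (size s).+1); last by lia.
rewrite -(@Uval_ns m (behead s) (size s)); last by rewrite size_behead; lia.
split; first by rewrite -ys_behead nalpha.
apply/andP; split; first by apply: Sr_ge0; lra.
exact: (@Sr_lt1 R m a _ _ m3).
Qed.

Lemma main_gen (R : realType) (m n : nat) (s t : seq nat) (a : R) :
  (3 <= m)%N -> (1 <= n)%N ->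
  is_Uexp m s n%:Z ->
  is_Uexp m t (n.+1)%:Z ->
  0 < a -> a < 1 -> a * a = m%:R * a - 1 ->
  let dP : int := (Palpha a n.+1)%:Z - (Palpha a n)%:Z in
  (head 0%N t = 0%N -> is_Uexp m (behead s) (n%:Z + dP - 1)) /\
  (head 0%N t != 0%N -> is_Uexp m (behead s) (dP - 1)).
Proof.
move=> m3 n1 Hs Ht a0 a1 a2 dP.
have en : n = Uval m s by case: Hs => _ e _; move: e; lia.
have et : n.+1 = Uval m t by case: Ht => _ e _; move: e; lia.
have [Es /andP[S0 S1]] := @floor_expand R m a s _ m3 a0 a1 a2 Hs.
have [Et /andP[T0 T1]] := @floor_expand R m a t _ m3 a0 a1 a2 Ht.
rewrite -en in Es; rewrite -et in Et.
move: Es S0 S1 Et T0 T1.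
set Ss := Sr R a _ _; set St := Sr R a _ _ => Es S0 S1 Et T0 T1.
have FLn : Num.floor (n%:R * a) = (Uval m (behead s))%:Z.
  by apply: floor_def; rewrite Es intrD -!pmulrn; apply/andP; split; lra.
have FRn : fracpart (n%:R * a) = Ss.
  by rewrite /fracpart FLn -pmulrn Es; ring.
have FLt : Num.floor (n.+1%:R * a) = (Uval m (behead t))%:Z.
  by apply: floor_def; rewrite Et intrD -!pmulrn; apply/andP; split; lra.
have FRt : fracpart (n.+1%:R * a) = St.
  by rewrite /fracpart FLt -pmulrn Et; ring.
have PS := @Pstep R a a0 a1 n. move: PS; set w := (1 - a <= _) => PS.
have [_ fr] := @frac_step R a a0 a1 (n%:R * a).
rewrite -fS -/w FRt FRn in fr.
have HAt := @Hall_of m t _ m3 Ht.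
have St' : St = (nth 0%N t 0)%:R * a + a * Sr R a (fun k => nth 0%N t k.+1) (size t).
  by rewrite /St Sr_shift.
have S'0 : 0 <= Sr R a (fun k => nth 0%N t k.+1) (size t) by apply: Sr_ge0; lra.
have S'1 : Sr R a (fun k => nth 0%N t k.+1) (size t) < 1.
  apply: (@Sr_lt1 R m a _ _ m3 a0 a1 a2) => j.
  exact: (proj1 (@shiftP m m3 _ HAt j)).
move: St' S'0 S'1; set S' := Sr R a _ _ => St' S'0 S'1.
have hd : head 0%N t = nth 0%N t 0 by rewrite nth0.
have IB := @isB m s _ m3 Hs.
have Pn : dP = Num.floor (n%:R * a) + 1 - (w : nat)%:Z * n%:Z by rewrite /dP PS; ring.
rewrite FLn in Pn.
split.
- move=> h0. have w1 : w = true.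
    case hw : w in fr Pn *; first done.
    exfalso. rewrite hd in h0; rewrite St' h0 /= mul0r add0r mulr0n subr0 in fr.
    have : a * S' < a * 1 by rewrite ltr_pM2l.
    lra.
  rewrite w1 in Pn. rewrite (_ : n%:Z + dP - 1 = (Uval m (behead s))%:Z) //.
  rewrite Pn /=; lia.
- move=> h0. have w1 : w = false.
    case hw : w in fr Pn *; last done.
    exfalso. rewrite hd in h0.
    have hh : 1 <= (nth 0%N t 0)%:R :> R by rewrite ler1n lt0n.
    rewrite St' /= mulr1n in fr.
    have : 1 * a <= (nth 0%N t 0)%:R * a by rewrite ler_pM2r.
    have : 0 <= a * S' by apply: mulr_ge0; lra.
    lra.
  rewrite w1 in Pn. rewrite (_ : dP - 1 = (Uval m (behead s))%:Z) //.
  rewrite Pn /=; lia.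
Qed.

Local Open Scope ring_scope.

Theorem corollary1 (R : realType) (m n : nat) (s t : seq nat) :
  (3 <= m)%N -> (1 <= n)%N ->
  is_Uexp m s n%:Z ->
  is_Uexp m t (n.+1)%:Z ->
  let beta : R := (m%:R + Num.sqrt (m%:R ^+ 2 - 4)) / 2 in
  let alpha : R := 1 / beta in
  let dP : int := (Palpha alpha n.+1)%:Z - (Palpha alpha n)%:Z in
  (head 0%N t = 0%N -> is_Uexp m (behead s) (n%:Z + dP - 1)) /\
  (head 0%N t != 0%N -> is_Uexp m (behead s) (dP - 1)).
Proof.
move=> m3 n1 Hs Ht.
have := @alpha_props R m m3; cbv zeta => -[a0 [a1 a2]].
exact: (@main_gen R m n s t _ m3 n1 Hs Ht a0 a1 a2).
Qed.
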